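(* Let $W$ be a complex reflection group acting on $V$ and let $g\in W$ satisfy $\ell_R(g)=\operatorname{codim}(V^g)$. Then: (1) every reflection $t$ with $t\le_{\mathcal R} g$ belongs to the parabolic closure $W_g$ of $g$; (2) for every parabolic subgroup $W_X\le W$ containing $g$, we have $\mathrm{Red}_W(g)=\mathrm{Red}_{W_X}(g)$.
   Context: $V$ is a finite-dimensional complex vector space with a Hermitian inner product; a (unitary) reflection is a unitary map whose fixed space is a hyperplane; a complex reflection group is a finite subgroup $W\le\mathrm{GL}(V)$ generated by reflections, with set of reflections $\mathcal R$. For $w\in W$, $V^w$ is its fixed space. The reflection length $\ell_R(g)$ is the minimal $k$ such that $g=t_1\cdots t_k$ with $t_i\in\mathcal R$; such a factorization of length $\ell_R(g)$ is reduced, and $\mathrm{Red}_W(g)$ denotes the set of tuples $(t_1,\dots,t_{\ell_R(g)})\in\mathcal R^{\ell_R(g)}$ with product $g$ (for a subgroup $W_X$, $\mathrm{Red}_{W_X}(g)$ uses reflections of $W_X$ and the reflection length in $W_X$). The absolute order is defined by $u\le_{\mathcal R}v$ iff $\ell_R(u)+\ell_R(u^{-1}v)=\ell_R(v)$. A parabolic subgroup is the pointwise stabilizer of a subset of $V$; the pointwise stabilizer of a flat (intersection of reflection hyperplanes) $X$ is denoted $W_X$. The parabolic closure $W_g$ of $g$ is the intersection of all parabolic subgroups containing $g$; it equals $W_{V^g}$. *)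

(* Defs.v *)
From HB Require Import structures.
From mathcomp Require Import all_boot all_order all_algebra.
Set Implicit Arguments. Unset Strict Implicit. Unset Printing Implicit Defensive.
Import Order.TTheory GRing.Theory Num.Theory.
Local Open Scope ring_scope.

(* V = C^n (row vectors 'rV[C]_n) with the standard Hermitian product
   <u, v> = u *m (conj v)^T; linear maps act on the right: v |-> v *m g. *)

Section RefGroups.
Variables (C : numClosedFieldType) (n : nat).
Notation M := 'M[C]_n.

Definition adjmx (g : M) : M := (map_mx Num.conj g)^T.

Definition unitary_mx (g : M) : Prop := g *m adjmx g = 1%:M.

Definition fixspace (g : M) : M := kermx (g - 1%:M).

Definition codim_fix (g : M) : nat := (n - \rank (fixspace g))%N.

Definition is_reflection (t : M) : Prop :=
  unitary_mx t /\ (\rank (fixspace t)).+1 = n.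

Definition mprod (s : seq M) : M := foldr (fun a b => a *m b) 1%:M s.

(* complex reflection group: a finite subgroup of GL(V) (given by the finite
   list W of its elements) generated by its (unitary) reflections *)
Definition complex_reflection_group (W : seq M) : Prop :=
  [/\ 1%:M \in W,
      (forall u v, u \in W -> v \in W -> u *m v \in W),
      (forall u, u \in W -> u \in unitmx /\ invmx u \in W) &
      (forall w, w \in W -> exists s : seq M,
          (forall t, t \in s -> t \in W /\ is_reflection t) /\ mprod s = w)].

(* subgroups are handled as predicates *)
Definition memW (W : seq M) : M -> Prop := fun w => w \in W.

Definition factorable (G : M -> Prop) (k : nat) (g : M) : Prop :=
  exists s : seq M, size s = k /\
    (forall t, t \in s -> G t /\ is_reflection t) /\ mprod s = g.

Definition reflen (G : M -> Prop) (g : M) (k : nat) : Prop :=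
  factorable G k g /\ forall j, factorable G j g -> (k <= j)%N.

Definition Red (G : M -> Prop) (g : M) (s : seq M) : Prop :=
  exists k, reflen G g k /\ size s = k /\
    (forall t, t \in s -> G t /\ is_reflection t) /\ mprod s = g.

Definition abs_le (G : M -> Prop) (u v : M) : Prop :=
  exists a b c, reflen G u a /\ reflen G (invmx u *m v) b /\
    reflen G v c /\ (a + b)%N = c.

(* pointwise stabilizer in W of a subset A of V (a parabolic subgroup) *)
Definition pstab (W : seq M) (A : 'rV[C]_n -> Prop) : M -> Prop :=
  fun w => w \in W /\ forall v, A v -> v *m w = v.

Definition parabolic_closure (W : seq M) (g : M) : M -> Prop :=
  fun w => forall A : 'rV[C]_n -> Prop, pstab W A g -> pstab W A w.

End RefGroups.

(* Main.v *)
Require Import Defs.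
From HB Require Import structures.
From mathcomp Require Import all_boot all_order all_algebra.
From mathcomp Require Import zify.
Import Order.TTheory GRing.Theory Num.Theory.
Local Open Scope ring_scope.

Section Helpers.
Variables (C : numClosedFieldType) (n : nat).
Notation M := 'M[C]_n.

Definition Fs (s : seq M) : M := foldr (fun t F => fixspace t :&: F)%MS 1%:M s.

Lemma fixP m (B : 'M[C]_(m, n)) (g : M) :
  (B <= fixspace g)%MS <-> B *m g = B.
Proof.
rewrite /fixspace; split.
  by move/sub_kermxP; rewrite mulmxBr mulmx1 => /eqP; rewrite subr_eq0 => /eqP.
by move=> H; apply/sub_kermxP; rewrite mulmxBr mulmx1 H subrr.
Qed.

Lemma Fs_fix (s : seq M) : (Fs s <= fixspace (mprod s))%MS.
Proof.
elim: s => [|t s IH] /=.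
  by apply/fixP; rewrite mulmx1.
apply/fixP.
have H1 : (fixspace t :&: Fs s <= fixspace t)%MS := capmxSl _ _.
have H2 : (fixspace t :&: Fs s <= fixspace (mprod s))%MS :=
  submx_trans (capmxSr _ _) IH.
move/fixP: H1 => H1; move/fixP: H2 => H2.
by rewrite mulmxA H1 H2.
Qed.

Lemma Fs_sub (s : seq M) t : t \in s -> (Fs s <= fixspace t)%MS.
Proof.
elim: s => [|u s IH] //=; rewrite inE => /orP [/eqP -> | Hs].
  exact: capmxSl.
exact: submx_trans (capmxSr _ _) (IH Hs).
Qed.

Lemma Fs_rank (s : seq M) : (forall t, t \in s -> is_reflection t) ->
  (n - size s <= \rank (Fs s))%N.
Proof.
elim: s => [|t s IH] Hr /=.
  by rewrite mxrank1; lia.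
have IH' := IH (fun u Hu => Hr u (mem_behead (s:=t :: s) Hu)).
have [_ Ht] := Hr t (mem_head _ _).
have E := mxrank_sum_cap (fixspace t) (Fs s).
have L := rank_leq_col (fixspace t + Fs s)%MS.
lia.
Qed.

Lemma core (s : seq M) : (forall t, t \in s -> is_reflection t) ->
  size s = codim_fix (mprod s) ->
  forall t, t \in s -> (fixspace (mprod s) <= fixspace t)%MS.
Proof.
move=> Hr Hs t Ht.
have R := Fs_rank s Hr.
have L := rank_leq_col (fixspace (mprod s)).
have S := Fs_fix s.
have := mxrank_leqif_sup S.
move=> [_ Heq].
have : (\rank (fixspace (mprod s)) <= \rank (Fs s))%N.
  move: Hs; rewrite /codim_fix => Hs; lia.
move=> Hle.
have Hr2 : \rank (Fs s) = \rank (fixspace (mprod s)).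
  apply/eqP; rewrite eqn_leq Hle andbT; exact: mxrank_leqif_sup S.
have : (fixspace (mprod s) <= Fs s)%MS by rewrite -Heq Hr2.
move=> HF; exact: submx_trans HF (Fs_sub s t Ht).
Qed.

Lemma reflen_uniq (G : M -> Prop) g a b :
  reflen G g a -> reflen G g b -> a = b.
Proof.
move=> [fa ma] [fb mb]; apply/eqP; rewrite eqn_leq (ma _ fb) (mb _ fa) //.
Qed.

End Helpers.
Arguments Fs_rank {C n s}.
Arguments Fs_sub {C n s t}.
Arguments reflen_uniq {C n G g a b}.
Arguments core {C n s}.

Theorem mainTheorem3 (C : numClosedFieldType) (n : nat) (W : seq 'M[C]_n)
    (g : 'M[C]_n) :
  complex_reflection_group W -> g \in W ->
  reflen (memW W) g (codim_fix g) ->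
  (forall t : 'M[C]_n, t \in W -> is_reflection t ->
      abs_le (memW W) t g -> parabolic_closure W g t) /\
  (forall A : 'rV[C]_n -> Prop, pstab W A g ->
      forall s : seq 'M[C]_n, Red (memW W) g s <-> Red (pstab W A) g s).
Proof.
move=> [W1 WM WI _] gW Hg.
have key : forall s, size s = codim_fix g ->
    (forall t, t \in s -> is_reflection t) -> mprod s = g ->
    forall t, t \in s -> (fixspace g <= fixspace t)%MS.
  by move=> s Hs Hr Hp; rewrite -Hp; apply: core => //; rewrite Hp.
have fixv : forall A (t : 'M[C]_n), (fixspace g <= fixspace t)%MS ->
    pstab W A g -> forall v, A v -> v *m t = v.
  move=> A t Hsub [_ HA] v Av.
  apply/fixP; apply: submx_trans Hsub; apply/fixP; exact: HA.
split.
- move=> t tW tr [a [b [c [Ha [Hb [Hc Habc]]]]]].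
  have c_eq : c = codim_fix g := reflen_uniq Hc Hg.
  have a1 : a = 1%N.
    have f1 : factorable (memW W) 1 t.
      by exists [:: t]; split=> //; split; [move=> u; rewrite inE => /eqP ->|
        rewrite /mprod /= mulmx1].
    have Hle := (proj2 Ha) 1%N f1.
    have : a <> 0%N.
      move=> a0; move: Ha; rewrite a0 => -[[s0 [Hs0 [_ Hp]]] _].
      move: Hs0 Hp; case: s0 => //= _ Ht1.
      case: tr => _; rewrite -Ht1 /fixspace subrr kermx0 mxrank1; lia.
    lia.
  case: Hb => [[s [Hs [Hsr Hsp]]] _].
  have Htu := proj1 (WI t tW).
  move=> A Ag.
  split => //.
  apply: (fixv A t) => //.
  apply: (key (t :: s)) => //=.
  - by rewrite Hs; lia.
  - move=> u; rewrite inE => /orP [/eqP -> // | /Hsr []] //.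
  - by rewrite Hsp mulKVmx.
  - exact: mem_head.
- move=> A Ag s.
  have inst : forall s, size s = codim_fix g ->
      (forall t, t \in s -> memW W t /\ is_reflection t) -> mprod s = g ->
      forall t, t \in s -> pstab W A t /\ is_reflection t.
    move=> s0 Hs Hr Hp t Ht; have [tW tr] := Hr t Ht; split=> //; split=> //.
    apply: (fixv A t) => //; apply: (key s0) => // u Hu; exact: (proj2 (Hr u Hu)).
  have HgA : reflen (pstab W A) g (codim_fix g).
    case: Hg => [[s0 [Hs [Hr Hp]]] Hmin]; split.
      by exists s0; split=> //; split=> //; apply: inst.
    move=> j [s1 [Hs1 [Hr1 Hp1]]]; apply: Hmin; exists s1; split=> //; split=> //.
    move=> t Ht; have [[tW _] tr] := Hr1 t Ht; by split.
  split.
  + move=> [k [Hk [Hs [Hr Hp]]]].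
    have kk := reflen_uniq Hk Hg; subst k.
    exists (codim_fix g); split=> //; split=> //; split=> //.
    by apply: inst.
  + move=> [k [Hk [Hs [Hr Hp]]]].
    have kk := reflen_uniq Hk HgA; subst k.
    exists (codim_fix g); split=> //; split=> //; split=> //.
    move=> t Ht; have [[tW _] tr] := Hr t Ht; by split.
Qed.
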